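(* There exists $\theta_2\in(0,\pi/2)$, depending only on $\alpha$, such that $\mathcal Q(z,\pi(p),\theta)\subset B(p,r_p)$ for all $0<\theta\le\theta_2$, all $p\in\mathbb H\setminus\{0\}$ and all $z\in\mathbb R$ with $|z-z_p|\le|z_p|$.
   Context: $\mathbb H=\mathbb R^3$, $p=(x_p,y_p,z_p)$, group law $(x,y,z)\cdot(x',y',z')=(x+x',y+y',z+z'+\tfrac12(xy'-yx'))$, dilations $\delta_\lambda(x,y,z)=(\lambda x,\lambda y,\lambda^2z)$. Fix $\alpha>0$ such that $d_\alpha(p,q)=\inf\{r>0:\delta_{1/r}(p^{-1}\cdot q)\in B_\alpha\}$ is a distance, $B_\alpha$ the closed Euclidean ball of radius $\alpha$ at $0$. $B(p,r)=\{q:d_\alpha(q,p)\le r\}$, $r_p=d_\alpha(0,p)$. For $p\in\mathbb H$, $z\in\mathbb R$ and $\theta\in(0,\pi/2)$, $\mathcal Q(z,\pi(p),\theta)$ is the Euclidean convex hull in $\mathbb R^3$ of the four points $(0,0,z)$, $(x_p-y_p\tan\theta,\ y_p+x_p\tan\theta,\ z)$, $(x_p+y_p\tan\theta,\ y_p-x_p\tan\theta,\ z)$ and $(2x_p,2y_p,z)$. *)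

(* Defs.v *)
From Stdlib Require Import Reals Lra ClassicalEpsilon.
Open Scope R_scope.

Definition Heis : Type := (R * R * R)%type.
Definition hx (p : Heis) : R := fst (fst p).
Definition hy (p : Heis) : R := snd (fst p).
Definition hz (p : Heis) : R := snd p.
Definition mkH (x y z : R) : Heis := (x, y, z).

Definition hmul (p q : Heis) : Heis :=
  mkH (hx p + hx q) (hy p + hy q)
      (hz p + hz q + / 2 * (hx p * hy q - hy p * hx q)).
Definition hinv (p : Heis) : Heis := mkH (- hx p) (- hy p) (- hz p).
Definition dil (l : R) (p : Heis) : Heis :=
  mkH (l * hx p) (l * hy p) (l * l * hz p).

Definition in_Balpha (alpha : R) (p : Heis) : Prop :=
  hx p ^ 2 + hy p ^ 2 + hz p ^ 2 <= alpha ^ 2.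

Definition is_inf (S : R -> Prop) (m : R) : Prop :=
  (forall x, S x -> m <= x) /\ (forall m', (forall x, S x -> m' <= x) -> m' <= m).

Definition Rinf (S : R -> Prop) : R :=
  epsilon (inhabits 0) (fun m => is_inf S m).

Definition d_alpha (alpha : R) (p q : Heis) : R :=
  Rinf (fun r => 0 < r /\ in_Balpha alpha (dil (/ r) (hmul (hinv p) q))).

Definition is_distance (d : Heis -> Heis -> R) : Prop :=
  (forall p q, 0 <= d p q) /\
  (forall p q, d p q = 0 <-> p = q) /\
  (forall p q, d p q = d q p) /\
  (forall p q w, d p w <= d p q + d q w).

Definition in_ball (alpha : R) (p : Heis) (r : R) (q : Heis) : Prop :=
  d_alpha alpha q p <= r.

Definition hzero : Heis := mkH 0 0 0.

Definition r_of (alpha : R) (p : Heis) : R := d_alpha alpha hzero p.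

Definition in_hull4 (a b c e q : Heis) : Prop :=
  exists l1 l2 l3 l4 : R,
    0 <= l1 /\ 0 <= l2 /\ 0 <= l3 /\ 0 <= l4 /\ l1 + l2 + l3 + l4 = 1 /\
    hx q = l1 * hx a + l2 * hx b + l3 * hx c + l4 * hx e /\
    hy q = l1 * hy a + l2 * hy b + l3 * hy c + l4 * hy e /\
    hz q = l1 * hz a + l2 * hz b + l3 * hz c + l4 * hz e.

Definition in_Q (z : R) (p : Heis) (theta : R) (q : Heis) : Prop :=
  in_hull4 (mkH 0 0 z)
           (mkH (hx p - hy p * tan theta) (hy p + hx p * tan theta) z)
           (mkH (hx p + hy p * tan theta) (hy p - hx p * tan theta) z)
           (mkH (2 * hx p) (2 * hy p) z) q.

(* Main.v *)
Require Import Defs.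
From Stdlib Require Import Reals Lra Psatz ClassicalEpsilon.
Open Scope R_scope.

Lemma inf_exists (S : R -> Prop) : (exists x, S x) -> (forall x, S x -> 0 <= x) ->
  exists m, is_inf S m.
Proof.
  intros [x0 Hx0] Hlb.
  destruct (completeness (fun x => S (- x))) as [m [Hub Hl]].
  - exists 0. intros y Hy. apply Hlb in Hy. lra.
  - exists (- x0). now rewrite Ropp_involutive.
  - exists (- m). split.
    + intros x Hx. assert (- x <= m). { apply Hub. now rewrite Ropp_involutive. } lra.
    + intros m' Hm'. assert (m <= - m'). { apply Hl. intros y Hy. apply Hm' in Hy. lra. } lra.
Qed.

Lemma Rinf_spec (S : R -> Prop) : (exists m, is_inf S m) -> is_inf S (Rinf S).
Proof. intros H. unfold Rinf. exact (epsilon_spec (inhabits 0) _ H). Qed.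

Lemma Rinf_mono (S T : R -> Prop) : (forall x, S x -> T x) -> (exists x, S x) ->
  (forall x, T x -> 0 <= x) -> Rinf T <= Rinf S.
Proof.
  intros HST HS HT.
  assert (HS0 : forall x, S x -> 0 <= x) by (intros; apply HT, HST; auto).
  destruct (Rinf_spec T) as [T1 T2].
  { apply inf_exists; auto. destruct HS as [x Hx]; exists x; auto. }
  destruct (Rinf_spec S) as [S1 S2].
  { apply inf_exists; auto. }
  apply S2. intros x Hx. apply T1, HST, Hx.
Qed.

Lemma key_ineq (alpha tau K a s t u Z m : R) :
  0 < alpha -> 0 <= tau -> alpha * tau + tau^2 * alpha^2 / 4 + tau^2 <= 1 ->
  0 <= a -> 0 < K -> 0 <= m <= 1 -> m <= s -> m <= 2 - s ->
  Rabs t <= tau * m -> Rabs u <= Rabs Z ->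
  K * a + K^2 * Z^2 <= alpha^2 ->
  K * (((1 - s)^2 + t^2) * a) + K^2 * (u + t * a / 2)^2 <= alpha^2.
Proof.
  intros Ha Htau Hc Ha0 HK Hm Hms Hms2 Ht Hu HP.
  set (v := Rabs t). set (Za := Rabs Z).
  assert (Hv0 : 0 <= v) by apply Rabs_pos.
  assert (HZ0 : 0 <= Za) by apply Rabs_pos.
  assert (Ht2 : t^2 = v^2) by (unfold v; now rewrite pow2_abs).
  assert (HZ2 : Z^2 = Za^2) by (unfold Za; now rewrite pow2_abs).
  assert (h1 : K * Za <= alpha).
  { assert (K^2 * Za^2 <= alpha^2) by (rewrite <- HZ2; nra). nra. }
  assert (h2 : K * a <= alpha^2) by nra.
  assert (h3 : m <= s * (2 - s)) by nra.
  assert (h4 : (u + t * a / 2)^2 <= Z^2 + Za * v * a + v^2 * a^2 / 4).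
  { assert (Hut : u * t * a <= Za * v * a).
    { apply Rmult_le_compat_r; auto.
      apply Rle_trans with (Rabs (u * t)). apply Rle_abs.
      rewrite Rabs_mult. apply Rmult_le_compat; auto using Rabs_pos; apply Rle_refl. }
    assert (u^2 <= Z^2).
    { rewrite HZ2, <- (pow2_abs u). apply pow_incr. split; auto using Rabs_pos. }
    nra. }
  assert (hv : v <= tau * m) by exact Ht.
  assert (h5 : K * Za * v + K * v^2 * a / 4 + v^2 <= s * (2 - s)).
  { assert (K * Za * v <= alpha * v) by (apply Rmult_le_compat_r; auto).
    assert (alpha * v <= alpha * (tau * m)) by (apply Rmult_le_compat_l; lra).
    assert (v^2 <= tau^2 * m^2) by (rewrite <- Rpow_mult_distr; apply pow_incr; lra).
    assert (tau^2 * m^2 <= tau^2 * m) by (apply Rmult_le_compat_l; nra).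
    assert (v^2 <= tau^2 * m) by lra.
    assert (K * a * v^2 <= alpha^2 * v^2) by (apply Rmult_le_compat_r; nra).
    assert (alpha^2 * v^2 <= alpha^2 * (tau^2 * m)) by (apply Rmult_le_compat_l; nra).
    assert (alpha * (tau * m) + alpha^2 * (tau^2 * m) / 4 + tau^2 * m <= m) by nra.
    lra. }
  assert (h6 : K^2 * Za * v * a + K^2 * v^2 * a^2 / 4 <= K * a * (s * (2 - s) - v^2)).
  { assert (0 <= K * a) by nra. nra. }
  rewrite Ht2. nra.
Qed.

Theorem lemma5p1 (alpha : R) (Halpha : 0 < alpha)
  (Hdist : is_distance (d_alpha alpha)) :
  exists theta2 : R, 0 < theta2 < PI / 2 /\
    forall (theta : R) (p : Heis) (z : R),
      0 < theta <= theta2 -> p <> hzero -> Rabs (z - hz p) <= Rabs (hz p) ->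
      forall q : Heis, in_Q z p theta q -> in_ball alpha p (r_of alpha p) q.
Proof.
  set (tau0 := / (2 + 2 * alpha)).
  assert (Ht0 : 0 < tau0) by (unfold tau0; apply Rinv_0_lt_compat; lra).
  assert (E0 : tau0 * (2 + 2 * alpha) = 1) by (unfold tau0; field; lra).
  assert (Ht0a : alpha * tau0 <= 1/2) by nra.
  assert (Ht01 : tau0 <= 1/2) by nra.
  exists (atan tau0). split.
  { split. rewrite <- atan_0. apply atan_increasing; lra.
    apply atan_bound. }
  intros theta p z [Hth1 Hth2] Hp Hz q HQ.
  assert (Hatb := atan_bound tau0).
  set (tau := tan theta).
  assert (Htau0 : 0 <= tau) by (unfold tau; left; apply tan_gt_0; lra).
  assert (Htau1 : tau <= tau0).
  { unfold tau. rewrite <- (atan_right_inv tau0).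
    destruct (Req_dec theta (atan tau0)) as [E|E]; [rewrite E; lra|].
    left. apply tan_increasing; lra. }
  assert (Hc : alpha * tau + tau^2 * alpha^2 / 4 + tau^2 <= 1).
  { assert (alpha * tau <= 1/2).
    { apply Rle_trans with (alpha * tau0); [apply Rmult_le_compat_l; lra|lra]. }
    assert (tau^2 <= 1/4).
    { apply Rle_trans with ((1/2)^2); [apply pow_incr; lra|lra]. }
    assert ((alpha * tau)^2 <= (1/2)^2) by (apply pow_incr; nra).
    assert (tau^2 * alpha^2 = (alpha * tau)^2) by ring.
    lra. }
  unfold in_ball, r_of, d_alpha.
  apply Rinf_mono.
  3: { intros x [Hx _]; lra. }
  2: { destruct p as [[x y] Z].
        unfold in_Balpha, dil, hmul, hinv, hx, hy, hz, mkH, hzero; cbn [fst snd].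
        set (K := x^2 + y^2 + Z^2).
        assert (HK : 0 <= K) by (unfold K; nra).
        set (r := (1 + K) * (1 + / alpha)).
        assert (Hia : 0 < / alpha) by (apply Rinv_0_lt_compat; lra).
        assert (Hr1 : 1 <= r) by (unfold r; nra).
        assert (Har : 1 + K <= alpha * r).
        { unfold r. replace (alpha * ((1 + K) * (1 + / alpha))) with ((1 + K) * (alpha + 1)) by (field; lra). nra. }
        exists r. split; [lra|].
        set (k := / r).
        assert (Hkr : k * r = 1) by (unfold k; field; lra).
        assert (Hk0 : 0 < k) by (unfold k; apply Rinv_0_lt_compat; lra).
        assert (Hk1 : k <= 1) by nra.
        assert (HkK : k^2 * K <= alpha^2).
        { assert (K <= (alpha * r)^2) by nra.
          assert (k^2 * (alpha * r)^2 = alpha^2) by (replace (k^2 * (alpha * r)^2) with (alpha^2 * (k * r)^2) by ring; rewrite Hkr; ring).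
          assert (k^2 * K <= k^2 * (alpha * r)^2) by (apply Rmult_le_compat_l; nra).
          lra. }
        assert (Hz2 : (k * k * Z)^2 <= k^2 * Z^2).
        { replace ((k * k * Z)^2) with (k^2 * (k^2 * Z^2)) by ring.
          assert (k^2 <= 1) by nra.
          assert (0 <= k^2 * Z^2) by nra. nra. }
        unfold K in HkK.
        replace (- 0 + x) with x by ring. replace (- 0 + y) with y by ring.
        replace (- 0 + Z + / 2 * (- 0 * y - - 0 * x)) with Z by ring.
        assert (E1 : (k * x)^2 + (k * y)^2 = k^2 * (x^2 + y^2 + Z^2) - k^2 * Z^2) by ring.
        unfold mkH; cbn [fst snd]. lra. }
  intros r [Hr HB]. split; [exact Hr|].
  destruct HQ as (l1 & l2 & l3 & l4 & H1 & H2 & H3 & H4 & Hs & Hqx & Hqy & Hqz).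
  destruct p as [[x y] Z]. destruct q as [[qx qy] qz].
  unfold in_Balpha, dil, hmul, hinv, hx, hy, hz, mkH, hzero in *; cbn [fst snd] in *.
  assert (Hqz' : qz = z) by (rewrite Hqz; replace (l1 * z + l2 * z + l3 * z + l4 * z) with ((l1 + l2 + l3 + l4) * z) by ring; rewrite Hs; ring).
  fold tau in Hqx, Hqy.
  assert (Habs : Rabs (tau * (l2 - l3)) <= tau * (l2 + l3)).
  { rewrite Rabs_mult, (Rabs_right tau) by lra. apply Rmult_le_compat_l; [lra|].
    apply Rabs_le; lra. }
  assert (Hu : Rabs (Z - z) <= Rabs Z) by (rewrite Rabs_minus_sym; exact Hz).
  assert (HK : 0 < / r * / r) by (apply Rmult_lt_0_compat; apply Rinv_0_lt_compat; lra).
  assert (HP : (/ r * / r) * (x^2 + y^2) + (/ r * / r)^2 * Z^2 <= alpha^2).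
  { unfold mkH in HB; cbn [fst snd] in HB. eapply Rle_trans; [|exact HB]. right. ring. }
  pose proof (key_ineq alpha tau (/ r * / r) (x^2 + y^2) (l2 + l3 + 2 * l4)
     (tau * (l2 - l3)) (Z - z) Z (l2 + l3) Halpha Htau0 Hc
     ltac:(nra) HK ltac:(lra) ltac:(lra) ltac:(lra) Habs Hu HP) as Hk.
  eapply Rle_trans; [|exact Hk]. right.
  rewrite Hqx, Hqy, Hqz'.
  replace l1 with (1 - l2 - l3 - l4) by lra. field. lra.
Qed.
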